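(* Let $(u,v)$ be a $C^3$ solution of system (W) on an open set $U\subseteq\mathbb{R}^2$. If $u_y\neq0$ on $U$, then $\partial_x\beta_1=0$ and $\partial_x\beta_3=0$ on $U$ (so $\beta_1,\partial_y\beta_1,\beta_3$ are functions of $y$ alone). If $v_x\neq0$ on $U$, then $\partial_y\alpha_1=0$ and $\partial_y\alpha_3=0$ on $U$ (so $\alpha_1,\partial_x\alpha_1,\alpha_3$ are functions of $x$ alone).
   Context: System (W): $u_{xy}+\frac{u_xu_y}{2(1+e^{(u+v)/2})}=0$, $v_{xy}+\frac{v_xv_y}{2(1+e^{(u+v)/2})}=0$. Define \[ \beta_1=\frac{u_yv_y}{1+e^{-(u+v)/2}},\quad \beta_3=\frac{2u_{yy}+u_y^2-\beta_1}{u_y},\quad \alpha_1=\frac{u_xv_x}{1+e^{-(u+v)/2}},\quad \alpha_3=\frac{2v_{xx}+v_x^2-\alpha_1}{v_x}. \] *)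

(* Defs.v *)
From Stdlib Require Import Reals.
Open Scope R_scope.

Definition open2 (U : R -> R -> Prop) : Prop :=
  forall x y, U x y -> exists d, 0 < d /\
    forall x' y', Rabs (x' - x) < d -> Rabs (y' - y) < d -> U x' y'.

Definition cont2_on (U : R -> R -> Prop) (f : R -> R -> R) : Prop :=
  forall x y, U x y -> forall eps, 0 < eps -> exists d, 0 < d /\
    forall x' y', Rabs (x' - x) < d -> Rabs (y' - y) < d ->
      Rabs (f x' y' - f x y) < eps.

Definition is_dx (U : R -> R -> Prop) (f g : R -> R -> R) : Prop :=
  forall x y, U x y -> derivable_pt_lim (fun t => f t y) x (g x y).
Definition is_dy (U : R -> R -> Prop) (f g : R -> R -> R) : Prop :=
  forall x y, U x y -> derivable_pt_lim (fun t => f x t) y (g x y).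

Fixpoint Ck (k : nat) (U : R -> R -> Prop) (f : R -> R -> R) : Prop :=
  match k with
  | O => cont2_on U f
  | S k' => cont2_on U f /\ exists gx gy, is_dx U f gx /\ is_dy U f gy /\
              Ck k' U gx /\ Ck k' U gy
  end.

Definition beta1 (u v uy vy : R -> R -> R) (x y : R) : R :=
  uy x y * vy x y / (1 + exp (- (u x y + v x y) / 2)).
Definition beta3 (u v uy uyy vy : R -> R -> R) (x y : R) : R :=
  (2 * uyy x y + uy x y ^ 2 - beta1 u v uy vy x y) / uy x y.
Definition alpha1 (u v ux vx : R -> R -> R) (x y : R) : R :=
  ux x y * vx x y / (1 + exp (- (u x y + v x y) / 2)).
Definition alpha3 (u v ux vx vxx : R -> R -> R) (x y : R) : R :=
  (2 * vxx x y + vx x y ^ 2 - alpha1 u v ux vx x y) / vx x y.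

(* Main.v *)
Require Import Defs.
From Stdlib Require Import Reals Lra.
From Coquelicot Require Import Coquelicot.
Open Scope R_scope.

Lemma L_const c x : derivable_pt_lim (fun _ => c) x 0.
Proof. apply (derivable_pt_lim_const c x). Qed.
Lemma L_plus f g x a b : derivable_pt_lim f x a -> derivable_pt_lim g x b ->
  derivable_pt_lim (fun t => f t + g t) x (a + b).
Proof. intros; apply (derivable_pt_lim_plus f g x a b); auto. Qed.
Lemma L_minus f g x a b : derivable_pt_lim f x a -> derivable_pt_lim g x b ->
  derivable_pt_lim (fun t => f t - g t) x (a - b).
Proof. intros; apply (derivable_pt_lim_minus f g x a b); auto. Qed.
Lemma L_mult f g x a b : derivable_pt_lim f x a -> derivable_pt_lim g x b ->
  derivable_pt_lim (fun t => f t * g t) x (a * g x + f x * b).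
Proof. intros; apply (derivable_pt_lim_mult f g x a b); auto. Qed.
Lemma L_div f g x a b : derivable_pt_lim f x a -> derivable_pt_lim g x b -> g x <> 0 ->
  derivable_pt_lim (fun t => f t / g t) x ((a * g x - b * f x) / (g x)²).
Proof. intros; apply (derivable_pt_lim_div f g x a b); auto. Qed.
Lemma L_opp f x a : derivable_pt_lim f x a ->
  derivable_pt_lim (fun t => - f t) x (- a).
Proof. intros; apply (derivable_pt_lim_opp f x a); auto. Qed.
Lemma L_exp f x a : derivable_pt_lim f x a ->
  derivable_pt_lim (fun t => exp (f t)) x (exp (f x) * a).
Proof. intros H.
  apply (derivable_pt_lim_comp f exp x a (exp (f x)) H (derivable_pt_lim_exp (f x))). Qed.
Lemma L_pow f x a n : derivable_pt_lim f x a ->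
  derivable_pt_lim (fun t => f t ^ n) x (INR n * f x ^ Init.Nat.pred n * a).
Proof. intros H.
  apply (derivable_pt_lim_comp f (fun y => y ^ n) x a _ H (derivable_pt_lim_pow (f x) n)). Qed.

Lemma dpl_loc f g x l d : 0 < d -> (forall t, Rabs (t - x) < d -> f t = g t) ->
  derivable_pt_lim g x l -> derivable_pt_lim f x l.
Proof.
  intros Hd He Hg eps Heps. destruct (Hg eps Heps) as [del Hdel].
  assert (Hm : 0 < Rmin del d) by (apply Rmin_pos; [apply cond_pos|lra]).
  exists (mkposreal _ Hm). intros h Hh Hhd. simpl in Hhd.
  rewrite (He x), (He (x+h)).
  - apply Hdel; auto. apply Rlt_le_trans with (1:=Hhd); apply Rmin_l.
  - replace (x + h - x) with h by ring. apply Rlt_le_trans with (1:=Hhd); apply Rmin_r.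
  - replace (x - x) with 0 by ring. rewrite Rabs_R0; lra.
Qed.

Lemma Derive_of f x l : derivable_pt_lim f x l -> Derive f x = l.
Proof. intros H. apply is_derive_unique. apply is_derive_Reals. exact H. Qed.

Lemma loc2 U x y : open2 U -> U x y -> exists d, 0 < d /\ forall a b,
  Rabs (a - x) < d -> Rabs (b - y) < d -> U a b /\
  (forall z, Rabs (z - a) < d -> U z b) /\ (forall z, Rabs (z - b) < d -> U a z).
Proof.
  intros HU Hxy. destruct (HU x y Hxy) as [d [Hd H]]. exists (d/2). split; [lra|].
  intros a b Ha Hb. split; [apply H; lra|]. split; intros z Hz; apply H.
  - replace (z - x) with ((z - a) + (a - x)) by ring.
    eapply Rle_lt_trans; [apply Rabs_triang|lra].
  - lra.
  - lra.
  - replace (z - y) with ((z - b) + (b - y)) by ring.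
    eapply Rle_lt_trans; [apply Rabs_triang|lra].
Qed.

Lemma uniq_dx U f g1 g2 x y : is_dx U f g1 -> is_dx U f g2 -> U x y -> g1 x y = g2 x y.
Proof. intros H1 H2 H; eapply uniqueness_limite; [apply H1|apply H2]; auto. Qed.
Lemma uniq_dy U f g1 g2 x y : is_dy U f g1 -> is_dy U f g2 -> U x y -> g1 x y = g2 x y.
Proof. intros H1 H2 H; eapply uniqueness_limite; [apply H1|apply H2]; auto. Qed.

Lemma dx_ext U f g h : open2 U -> (forall x y, U x y -> f x y = g x y) ->
  is_dx U f h -> is_dx U g h.
Proof.
  intros HU He Hf x y Hxy. destruct (loc2 U x y HU Hxy) as [d [Hd Hl]].
  apply dpl_loc with (g := fun t => f t y) (d := d); auto.
  intros t Ht. symmetry. apply He. apply (Hl x y); auto; rewrite Rminus_diag, Rabs_R0; lra.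
Qed.
Lemma dy_ext U f g h : open2 U -> (forall x y, U x y -> f x y = g x y) ->
  is_dy U f h -> is_dy U g h.
Proof.
  intros HU He Hf x y Hxy. destruct (loc2 U x y HU Hxy) as [d [Hd Hl]].
  apply dpl_loc with (g := fun t => f x t) (d := d); auto.
  intros t Ht. symmetry. apply He. apply (Hl x y); auto; rewrite Rminus_diag, Rabs_R0; lra.
Qed.

Lemma exd_of f x l : derivable_pt_lim f x l -> ex_derive f x.
Proof. intros H; exists l; apply is_derive_Reals; exact H. Qed.

Lemma core U f fx fy : open2 U -> Ck 2 U f -> is_dx U f fx -> is_dy U f fy ->
  exists h, is_dx U fy h /\ is_dy U fx h.
Proof.
  intros HU [Hc [gx [gy [Hgx [Hgy [Cgx Cgy]]]]]] Hfx Hfy.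
  destruct Cgx as [_ [gxx [gxy [Hgxx [Hgxy [_ Cgxy]]]]]].
  destruct Cgy as [_ [gyx [gyy [Hgyx [Hgyy [Cgyx _]]]]]].
  simpl in Cgxy, Cgyx.
  assert (Ex : forall x y, U x y -> fx x y = gx x y) by (intros; eapply uniq_dx; eauto).
  assert (Ey : forall x y, U x y -> fy x y = gy x y) by (intros; eapply uniq_dy; eauto).
  exists gyx. split.
  - apply dx_ext with gy; auto. intros; symmetry; auto.
  - intros x y Hxy.
    destruct (loc2 U x y HU Hxy) as [d [Hd Hl]].
    assert (Z : Rabs (x - x) < d) by (rewrite Rminus_diag, Rabs_R0; lra).
    assert (Zy : Rabs (y - y) < d) by (rewrite Rminus_diag, Rabs_R0; lra).
    assert (D1 : forall a b, Rabs (a - x) < d -> Rabs (b - y) < d ->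
       Derive (fun z => Derive (fun t => f z t) b) a = gyx a b).
    { intros a b Ha Hb. destruct (Hl a b Ha Hb) as [Hab [Hz1 Hz2]].
      apply Derive_of. apply dpl_loc with (g := fun z => gy z b) (d := d); auto.
      intros z Hz. apply Derive_of, Hgy, Hz1, Hz. }
    assert (D2 : forall a b, Rabs (a - x) < d -> Rabs (b - y) < d ->
       Derive (fun z => Derive (fun t => f t z) a) b = gxy a b).
    { intros a b Ha Hb. destruct (Hl a b Ha Hb) as [Hab [Hz1 Hz2]].
      apply Derive_of. apply dpl_loc with (g := fun z => gx a z) (d := d); auto.
      intros z Hz. apply Derive_of, Hgx, Hz2, Hz. }
    assert (S : gyx x y = gxy x y).
    { rewrite <- (D1 x y Z Zy), <- (D2 x y Z Zy). apply Schwarz.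
      - exists (mkposreal d Hd). simpl. intros a b Ha Hb.
        destruct (Hl a b Ha Hb) as [Hab [Hz1 Hz2]].
        repeat split.
        + eapply exd_of; apply Hgx; auto.
        + eapply exd_of; apply Hgy; auto.
        + apply exd_of with (gyx a b).
          apply dpl_loc with (g := fun z => gy z b) (d := d); auto.
          intros z Hz. apply Derive_of, Hgy, Hz1, Hz.
        + apply exd_of with (gxy a b).
          apply dpl_loc with (g := fun z => gx a z) (d := d); auto.
          intros z Hz. apply Derive_of, Hgx, Hz2, Hz.
      - intros eps. destruct (Cgyx x y Hxy eps (cond_pos eps)) as [d1 [Hd1 H1]].
        assert (Hm : 0 < Rmin d d1) by (apply Rmin_pos; lra).
        exists (mkposreal _ Hm). simpl. intros a b Ha Hb.
        pose proof (Rmin_l d d1); pose proof (Rmin_r d d1).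
        rewrite (D1 a b), (D1 x y); try lra. apply H1; lra.
      - intros eps. destruct (Cgxy x y Hxy eps (cond_pos eps)) as [d1 [Hd1 H1]].
        assert (Hm : 0 < Rmin d d1) by (apply Rmin_pos; lra).
        exists (mkposreal _ Hm). simpl. intros a b Ha Hb.
        pose proof (Rmin_l d d1); pose proof (Rmin_r d d1).
        rewrite (D2 a b), (D2 x y); try lra. apply H1; lra. }
    rewrite S. apply dpl_loc with (g := fun t => gx x t) (d := d); auto.
    intros t Ht. apply Ex. apply (Hl x y Z Zy). exact Ht.
Qed.

Lemma Ck_pred k U f : Ck (S k) U f -> Ck k U f.
Proof.
  revert U f; induction k; intros U f H.
  - exact (proj1 H).
  - destruct H as [Hc [gx [gy [H1 [H2 [H3 H4]]]]]].
    split; auto. exists gx, gy. repeat split; auto.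
Qed.

Lemma L_inv f x a : derivable_pt_lim f x a -> f x <> 0 ->
  derivable_pt_lim (fun t => / f t) x (- a / (f x)²).
Proof. intros Hf Hn.
  apply dpl_loc with (g := fun t => 1 / f t) (d := 1); [lra| |].
  - intros; unfold Rdiv; ring.
  - replace (- a / (f x)²) with ((0 * f x - a * 1) / (f x)²) by (unfold Rsqr; field; auto).
    apply L_div; auto. apply L_const. Qed.

Ltac dside := cbv beta; match goal with
  | |- context [exp ?a] => pose proof (exp_pos a); lra
  | _ => first [lra | assumption] end.
Ltac dsolve := repeat (first [eassumption | apply L_const | eapply L_plus | eapply L_minus
  | eapply L_div | eapply L_mult | eapply L_inv | eapply L_opp | eapply L_exp | eapply L_pow]).

Lemma L_zero f x L : derivable_pt_lim f x L -> L = 0 -> derivable_pt_lim f x 0.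
Proof. intros H ->; exact H. Qed.

Theorem mainTheorem3 (U : R -> R -> Prop)
  (u v ux uy uxy uyy vx vy vxy vxx : R -> R -> R) :
  open2 U -> Ck 3 U u -> Ck 3 U v ->
  is_dx U u ux -> is_dy U u uy -> is_dy U ux uxy -> is_dy U uy uyy ->
  is_dx U v vx -> is_dy U v vy -> is_dy U vx vxy -> is_dx U vx vxx ->
  (forall x y, U x y ->
     uxy x y + ux x y * uy x y / (2 * (1 + exp ((u x y + v x y) / 2))) = 0) ->
  (forall x y, U x y ->
     vxy x y + vx x y * vy x y / (2 * (1 + exp ((u x y + v x y) / 2))) = 0) ->
  ((forall x y, U x y -> uy x y <> 0) ->
     forall x y, U x y ->
       derivable_pt_lim (fun t => beta1 u v uy vy t y) x 0 /\
       derivable_pt_lim (fun t => beta3 u v uy uyy vy t y) x 0) /\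
  ((forall x y, U x y -> vx x y <> 0) ->
     forall x y, U x y ->
       derivable_pt_lim (fun t => alpha1 u v ux vx x t) y 0 /\
       derivable_pt_lim (fun t => alpha3 u v ux vx vxx x t) y 0).
Proof.
  intros HU Cu Cv Hux Huy Huxy Huyy Hvx Hvy Hvxy Hvxx Pu Pv.
  destruct (core U u ux uy HU (Ck_pred _ _ _ Cu) Hux Huy) as [h1 [H1a H1b]].
  destruct (core U v vx vy HU (Ck_pred _ _ _ Cv) Hvx Hvy) as [h0 [H0a H0b]].
  assert (E1 : forall x y, U x y -> h1 x y = uxy x y) by (intros; eapply uniq_dy; eauto).
  assert (E0 : forall x y, U x y -> h0 x y = vxy x y) by (intros; eapply uniq_dy; eauto).
  destruct Cu as [_ [gxu [gyu [Hgxu [Hgyu [_ Cgyu]]]]]].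
  destruct Cv as [_ [gxv [gyv [Hgxv [Hgyv [Cgxv _]]]]]].
  assert (Eyu : forall x y, U x y -> uy x y = gyu x y) by (intros; eapply uniq_dy; eauto).
  assert (Exv : forall x y, U x y -> vx x y = gxv x y) by (intros; eapply uniq_dx; eauto).
  destruct (core U gyu uxy uyy HU Cgyu) as [h2 [H2a H2b]].
  { apply dx_ext with uy; auto. intros x y Hxy; rewrite <- E1 by auto; apply H1a; auto. }
  { apply dy_ext with uy; auto. }
  destruct (core U gxv vxx vxy HU Cgxv) as [h3 [H3a H3b]].
  { apply dx_ext with vx; auto. }
  { apply dy_ext with vx; auto. }
  split.
  - intros Hu0 x y Hxy.
    pose proof (Hux x y Hxy) as B1. pose proof (Hvx x y Hxy) as B2.
    pose proof (H1a x y Hxy) as B3. rewrite E1 in B3 by auto.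
    pose proof (H0a x y Hxy) as B4. rewrite E0 in B4 by auto.
    pose proof (H2a x y Hxy) as B5.
    pose proof (Hu0 x y Hxy) as N0.
    assert (Ep : exp (- (u x y + v x y) / 2) = / exp ((u x y + v x y) / 2)).
    { rewrite <- exp_Ropp. f_equal. field. }
    assert (Q1 : uxy x y = - (ux x y * uy x y / (2 * (1 + exp ((u x y + v x y) / 2))))).
    { pose proof (Pu x y Hxy); lra. }
    assert (Q0 : vxy x y = - (vx x y * vy x y / (2 * (1 + exp ((u x y + v x y) / 2))))).
    { pose proof (Pv x y Hxy); lra. }
    pose proof (exp_pos ((u x y + v x y) / 2)) as Epos.
    split.
    + unfold beta1.
      eassert (D : derivable_pt_lim (fun t => uy t y * vy t y / (1 + exp (- (u t y + v t y) / 2))) x _).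
      { dsolve; dside. }
      apply (L_zero _ _ _ D). rewrite Ep, Q1, Q0.
      set (E := exp ((u x y + v x y) / 2)) in *. unfold Rsqr. field. lra.
    + unfold beta3, beta1.
      eassert (D : derivable_pt_lim (fun t => (2 * uyy t y + uy t y ^ 2 - uy t y * vy t y / (1 + exp (- (u t y + v t y) / 2))) / uy t y) x _).
      { dsolve; dside. }
      pose proof (Huxy x y Hxy) as C1. pose proof (Huyy x y Hxy) as C2.
      pose proof (Huy x y Hxy) as C3. pose proof (Hvy x y Hxy) as C4.
      destruct (loc2 U x y HU Hxy) as [d [Hd Hl]].
      assert (Z : Rabs (x - x) < d) by (rewrite Rminus_diag, Rabs_R0; lra).
      assert (Zy : Rabs (y - y) < d) by (rewrite Rminus_diag, Rabs_R0; lra).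
      eassert (D2 : derivable_pt_lim (fun t => - (ux x t * uy x t / (2 * (1 + exp ((u x t + v x t) / 2))))) y _).
      { dsolve; dside. }
      match type of D2 with derivable_pt_lim _ _ ?L =>
        assert (D3 : derivable_pt_lim (fun t => uxy x t) y L) end.
      { eapply (dpl_loc _ _ _ _ d Hd); [|exact D2]. intros t Ht.
        pose proof (Pu x t (proj2 (proj2 (Hl x y Z Zy)) t Ht)); lra. }
      pose proof (uniqueness_limite _ _ _ _ (H2b x y Hxy) D3) as Hh.
      apply (L_zero _ _ _ D). rewrite Hh, Ep, Q1, Q0.
      set (E := exp ((u x y + v x y) / 2)) in *. simpl. unfold Rsqr. field. repeat split; auto; lra.
  - intros Hv0 x y Hxy.
    pose proof (Huxy x y Hxy) as B1. pose proof (Hvxy x y Hxy) as B2.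
    pose proof (Huy x y Hxy) as B3. pose proof (Hvy x y Hxy) as B4.
    pose proof (H3b x y Hxy) as B5.
    pose proof (Hv0 x y Hxy) as N0.
    assert (Ep : exp (- (u x y + v x y) / 2) = / exp ((u x y + v x y) / 2)).
    { rewrite <- exp_Ropp. f_equal. field. }
    assert (Q1 : uxy x y = - (ux x y * uy x y / (2 * (1 + exp ((u x y + v x y) / 2))))).
    { pose proof (Pu x y Hxy); lra. }
    assert (Q0 : vxy x y = - (vx x y * vy x y / (2 * (1 + exp ((u x y + v x y) / 2))))).
    { pose proof (Pv x y Hxy); lra. }
    pose proof (exp_pos ((u x y + v x y) / 2)) as Epos.
    split.
    + unfold alpha1.
      eassert (D : derivable_pt_lim (fun t => ux x t * vx x t / (1 + exp (- (u x t + v x t) / 2))) y _).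
      { dsolve; dside. }
      apply (L_zero _ _ _ D). rewrite Ep, Q1, Q0.
      set (E := exp ((u x y + v x y) / 2)) in *. unfold Rsqr. field. lra.
    + unfold alpha3, alpha1.
      eassert (D : derivable_pt_lim (fun t => (2 * vxx x t + vx x t ^ 2 - ux x t * vx x t / (1 + exp (- (u x t + v x t) / 2))) / vx x t) y _).
      { dsolve; dside. }
      pose proof (Hvxx x y Hxy) as C1.
      pose proof (H0a x y Hxy) as C2. rewrite E0 in C2 by auto.
      pose proof (Hux x y Hxy) as C3. pose proof (Hvx x y Hxy) as C4.
      destruct (loc2 U x y HU Hxy) as [d [Hd Hl]].
      assert (Z : Rabs (x - x) < d) by (rewrite Rminus_diag, Rabs_R0; lra).
      assert (Zy : Rabs (y - y) < d) by (rewrite Rminus_diag, Rabs_R0; lra).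
      eassert (D2 : derivable_pt_lim (fun t => - (vx t y * vy t y / (2 * (1 + exp ((u t y + v t y) / 2))))) x _).
      { dsolve; dside. }
      match type of D2 with derivable_pt_lim _ _ ?L =>
        assert (D3 : derivable_pt_lim (fun t => vxy t y) x L) end.
      { eapply (dpl_loc _ _ _ _ d Hd); [|exact D2]. intros t Ht.
        pose proof (Pv t y (proj1 (proj2 (Hl x y Z Zy)) t Ht)); lra. }
      pose proof (uniqueness_limite _ _ _ _ (H3a x y Hxy) D3) as Hh.
      apply (L_zero _ _ _ D). rewrite Hh, Ep, Q1, Q0.
      set (E := exp ((u x y + v x y) / 2)) in *. simpl. unfold Rsqr. field. repeat split; auto; lra.
Qed.
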